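(* Let $(N_m)_{m\ge0}$ be positive integers with $N_0=N$, for each $m\ge1$ let $W_m:\mathbb{R}^{N_{m-1}}\to\mathbb{C}^{N_m}$ be linear with $W_m^*W_m=\mathrm{Id}$, and for each $m\ge0$ let $A_m$ be a block-averaging operator on $\mathbb{R}^{N_m}$. Let $X$ be a random vector in $\mathbb{R}^N$ with $E(\|X\|^2)<\infty$, let $(X_m)_{m\ge0}$ be its expected scattering layers and let $(\tilde X_m)_{m\ge0}$ be its averaged scattering layers (computed realization-wise, with the same $W_m$ and the $A_m$). Then for every $m\ge0$, $$E\big(\|A_m\tilde X_m-E(X_m)\|^2\big)\le\Big(\sum_{n=0}^m E\big(\|A_nX_n-E(X_n)\|^2\big)^{1/2}\Big)^2.$$
   Context: For $z\in\mathbb{C}^n$, $|z|$ denotes the vector of coordinatewise complex moduli; $\|\cdot\|$ is the Euclidean norm. Expected scattering layers: $X_0=X$, $X_{m+1}=|W_{m+1}(X_m-E(X_m))|$. A block-averaging operator $A_m$ on $\mathbb{R}^{N_m}$ is associated with a partition $\{B_{j,m}\}_j$ of $\{1,\dots,N_m\}$ into nonempty blocks, and is defined by $(A_mv)(n)=\frac{1}{|B_{j,m}|}\sum_{k\in B_{j,m}}v(k)$ for $n\in B_{j,m}$. Averaged scattering layers: $\tilde X_0=X$, $\tilde X_{m+1}=|W_{m+1}(\tilde X_m-A_m\tilde X_m)|$. *)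

(* Defs.v *)
From HB Require Import structures.
From mathcomp Require Import all_boot all_order all_algebra.
From mathcomp Require Import all_classical all_reals all_analysis.
From mathcomp.real_closed Require Import complex.
Set Implicit Arguments. Unset Strict Implicit. Unset Printing Implicit Defensive.
Import Order.TTheory GRing.Theory Num.Theory.
Local Open Scope ring_scope.

Section Defs.
Context {R : realType}.

Definition sqnorm n (v : 'cV[R]_n) : R := \sum_(i < n) v i 0 ^+ 2.

Definition toCv n (v : 'cV[R]_n) : 'cV[R[i]]_n := map_mx (fun x => (x%:C)%C) v.

Definition cmod n (z : 'cV[R[i]]_n) : 'cV[R]_n := map_mx (@ComplexField.Normc.normc R) z.

(* W : R^n -> C^m (R-linear, given by a complex matrix) satisfies W^* W = Id,
   where W^* is the adjoint of W for the real inner products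
   <u,v> = Re (sum_k conj(u_k) v_k) on C^m and the usual one on R^n;
   its matrix is Re (conj(W)^T W). *)
Definition adjoint_isometry m n (W : 'M[R[i]]_(m, n)) : Prop :=
  map_mx (@complex.Re R) ((map_mx (@conjc R) W)^T *m W) = 1%:M.

Definition block_partition n (P : {set {set 'I_n}}) : Prop :=
  finset.partition P [set: 'I_n].

Definition block_avg n (P : {set {set 'I_n}}) (v : 'cV[R]_n) : 'cV[R]_n :=
  \col_i ((\sum_(k in finset.pblock P i) v k 0) / (#|finset.pblock P i|)%:R).

Context {d : measure_display} {T : measurableType d} (Pr : probability T R).

Definition Evec n (Y : T -> 'cV[R]_n) : 'cV[R]_n :=
  \col_i fine (\int[Pr]_t (Y t i 0)%:E)%E.

Variables (Nn : nat -> nat) (W : forall m, 'M[R[i]]_(Nn m.+1, Nn m))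
  (A : forall m, {set {set 'I_(Nn m)}}) (X : T -> 'cV[R]_(Nn 0)).

Fixpoint exp_layer (m : nat) : T -> 'cV[R]_(Nn m) :=
  match m return T -> 'cV[R]_(Nn m) with
  | 0 => X
  | m'.+1 => fun t => cmod (W m' *m toCv (exp_layer m' t - Evec (exp_layer m')))
  end.

Fixpoint avg_layer (m : nat) : T -> 'cV[R]_(Nn m) :=
  match m return T -> 'cV[R]_(Nn m) with
  | 0 => X
  | m'.+1 => fun t =>
      cmod (W m' *m toCv (avg_layer m' t - block_avg (A m') (avg_layer m' t)))
  end.

End Defs.

(* Main.v *)
Require Import Defs.
From HB Require Import structures.
From mathcomp Require Import all_boot all_order all_algebra.
From mathcomp Require Import all_classical all_reals all_analysis.
From mathcomp.real_closed Require Import complex.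
From mathcomp Require Import ring lra measurable_realfun.
Set Implicit Arguments. Unset Strict Implicit. Unset Printing Implicit Defensive.
Import Order.TTheory GRing.Theory Num.Theory.
Local Open Scope ring_scope.
Section LA.
Context {R : realType}.

Lemma dsum_mul n (f g : 'I_n -> R) :
  \sum_i \sum_j f i * g j = (\sum_i f i) * (\sum_j g j).
Proof. by rewrite mulr_suml; apply: eq_bigr => i _; rewrite mulr_sumr. Qed.

Lemma CS_sum n (x y : 'I_n -> R) :
  (\sum_i x i * y i) ^+ 2 <= (\sum_i x i ^+ 2) * (\sum_i y i ^+ 2).
Proof.
have H : 0 <= \sum_i \sum_j (x i * y j - x j * y i) ^+ 2.
  by apply: sumr_ge0 => i _; apply: sumr_ge0 => j _; exact: sqr_ge0.
have E : \sum_i \sum_j (x i * y j - x j * y i) ^+ 2 =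
   \sum_i \sum_j (x i ^+ 2 * y j ^+ 2) + \sum_i \sum_j (y i ^+ 2 * x j ^+ 2)
   - 2 * \sum_i \sum_j ((x i * y i) * (x j * y j)).
  rewrite mulr_sumr -big_split -sumrB; apply: eq_bigr => i _ /=.
  rewrite mulr_sumr -big_split -sumrB; apply: eq_bigr => j _ /=; ring.
rewrite E !dsum_mul in H.
rewrite expr2; lra.
Qed.

Definition nrm n (v : 'cV[R]_n) := Num.sqrt (sqnorm v).

Lemma sqnorm_ge0 n (v : 'cV[R]_n) : 0 <= sqnorm v.
Proof. by apply: sumr_ge0 => i _; exact: sqr_ge0. Qed.

Lemma nrm_ge0 n (v : 'cV[R]_n) : 0 <= nrm v.
Proof. exact: sqrtr_ge0. Qed.

Lemma nrm_sqr n (v : 'cV[R]_n) : nrm v ^+ 2 = sqnorm v.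
Proof. by rewrite sqr_sqrtr // sqnorm_ge0. Qed.

Lemma nrm_le n n2 (v : 'cV[R]_n) (w : 'cV[R]_n2) : sqnorm v <= sqnorm w -> nrm v <= nrm w.
Proof. by move=> h; rewrite /nrm ler_sqrt // sqnorm_ge0. Qed.

Lemma nrmD n (v w : 'cV[R]_n) : nrm (v + w) <= nrm v + nrm w.
Proof.
have h1 : sqnorm (v + w) = sqnorm v + sqnorm w + 2 * \sum_i v i 0 * w i 0.
  rewrite /sqnorm mulr_sumr -!big_split; apply: eq_bigr => i _ /=.
  rewrite mxE; ring.
have h2 : \sum_i v i 0 * w i 0 <= nrm v * nrm w.
  have hc := CS_sum (fun i => v i 0) (fun i => w i 0).
  have hv := nrm_ge0 v; have hw := nrm_ge0 w.
  have ev := nrm_sqr v; have ew := nrm_sqr w.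
  rewrite /sqnorm in ev ew.
  rewrite -ev -ew in hc.
  set s := \sum_i _ in hc *.
  have hp : 0 <= nrm v * nrm w by apply: mulr_ge0.
  case: (lerP s 0) => hs; first by apply: le_trans hs hp.
  rewrite -(ler_pXn2r (n := 2)) //; last by apply: ltW.
  by rewrite exprMn.
have hv := nrm_ge0 v; have hw := nrm_ge0 w.
rewrite -(ler_pXn2r (n := 2)) ?nrm_ge0 //; last by apply: addr_ge0.
  2: by rewrite nnegrE nrm_ge0.
rewrite nrm_sqr h1 sqrrD -!nrm_sqr -mulr_natr; lra.
Qed.

Lemma nrmN n (v : 'cV[R]_n) : nrm (- v) = nrm v.
Proof. by rewrite /nrm /sqnorm; congr Num.sqrt; apply: eq_bigr => i _; rewrite mxE sqrrN. Qed.

Lemma nrmB n (v w : 'cV[R]_n) : nrm (v - w) <= nrm v + nrm w.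
Proof. by rewrite -(nrmN w); apply: nrmD. Qed.

Lemma nrm0 n : nrm (0 : 'cV[R]_n) = 0.
Proof. by rewrite /nrm /sqnorm big1 ?sqrtr0 // => i _; rewrite mxE expr0n. Qed.
End LA.
Section BA.
Context {R : realType}.
Variables (n : nat) (P : {set {set 'I_n}}) (HP : block_partition P).

Lemma pb_self i : i \in finset.pblock P i.
Proof. by case/and3P: HP => /eqP hc _ _; rewrite finset.mem_pblock hc finset.in_setT. Qed.

Lemma pb_same k i : k \in finset.pblock P i -> finset.pblock P k = finset.pblock P i.
Proof. by case/and3P: HP => _ ht _; apply: finset.same_pblock. Qed.

Lemma pb_sym k i : (k \in finset.pblock P i) = (i \in finset.pblock P k).
Proof.
apply/idP/idP => h.
- by rewrite (pb_same h) pb_self.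
- by rewrite (pb_same h) pb_self.
Qed.

Lemma pb_card i : (#|finset.pblock P i|%:R : R) != 0.
Proof. by rewrite pnatr_eq0 -lt0n; apply/card_gt0P; exists i; exact: pb_self. Qed.

Lemma avg_sum (w : 'I_n -> R) (v : 'cV[R]_n) :
  (forall i k, k \in finset.pblock P i -> w k = w i) ->
  \sum_i w i * block_avg P v i 0 = \sum_i w i * v i 0.
Proof.
move=> Hw.
pose F k := w k * v k 0 / (#|finset.pblock P k|%:R : R).
transitivity (\sum_i \sum_(k in finset.pblock P i) F k).
  apply: eq_bigr => i _; rewrite mxE GRing.mulrA mulr_sumr mulr_suml.
  by apply: eq_bigr => k hk; rewrite /F (pb_same hk) (Hw i k hk).
rewrite (eq_bigr (fun i => \sum_k (if k \in finset.pblock P i then F k else 0)));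
  last by move=> i _; rewrite big_mkcond.
rewrite exchange_big /=; apply: eq_bigr => k _.
rewrite -big_mkcond /= (eq_bigl (fun i => i \in finset.pblock P k)); last first.
  by move=> i; rewrite pb_sym.
by rewrite sumr_const -mulr_natr /F divfK // pb_card.
Qed.

Lemma avg_proj (v : 'cV[R]_n) :
  sqnorm (v - block_avg P v) = sqnorm v - sqnorm (block_avg P v).
Proof.
have h : \sum_i block_avg P v i 0 * block_avg P v i 0 =
         \sum_i block_avg P v i 0 * v i 0.
  by apply: avg_sum => i k hk; rewrite !mxE (pb_same hk).
rewrite /sqnorm.
have -> : \sum_i (v - block_avg P v) i 0 ^+ 2 =
   \sum_i v i 0 ^+ 2 - 2 * \sum_i block_avg P v i 0 * v i 0
   + \sum_i block_avg P v i 0 * block_avg P v i 0.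
  rewrite mulr_sumr -sumrB -big_split; apply: eq_bigr => i _ /=.
  have -> : (v - block_avg P v) i 0 = v i 0 - block_avg P v i 0 by rewrite !mxE.
  ring.
rewrite -h.
have -> : \sum_i block_avg P v i 0 ^+ 2 =
          \sum_i block_avg P v i 0 * block_avg P v i 0.
  by apply: eq_bigr => i _; rewrite expr2.
ring.
Qed.

Lemma avg_le (v : 'cV[R]_n) : sqnorm (block_avg P v) <= sqnorm v.
Proof.
have := sqnorm_ge0 (v - block_avg P v); rewrite avg_proj; lra.
Qed.

Lemma avg_le2 (v : 'cV[R]_n) : sqnorm (v - block_avg P v) <= sqnorm v.
Proof.
have := sqnorm_ge0 (block_avg P v); rewrite avg_proj; lra.
Qed.

Lemma avgB (v w : 'cV[R]_n) :
  block_avg P (v - w) = block_avg P v - block_avg P w.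
Proof.
apply/matrixP => i j; rewrite !mxE.
rewrite (eq_bigr (fun k => v k 0 - w k 0)); last by move=> k _; rewrite !mxE.
by rewrite sumrB mulrBl.
Qed.
End BA.
Section CX.
Context {R : realType}.

Lemma sqrt_contr (a b c d : R) :
  (Num.sqrt (a ^+ 2 + b ^+ 2) - Num.sqrt (c ^+ 2 + d ^+ 2)) ^+ 2
  <= (a - c) ^+ 2 + (b - d) ^+ 2.
Proof.
set s := Num.sqrt _; set t := Num.sqrt _.
have hs : 0 <= s by apply: sqrtr_ge0.
have ht : 0 <= t by apply: sqrtr_ge0.
have es : s ^+ 2 = a ^+ 2 + b ^+ 2 by rewrite sqr_sqrtr // addr_ge0 // sqr_ge0.
have et : t ^+ 2 = c ^+ 2 + d ^+ 2 by rewrite sqr_sqrtr // addr_ge0 // sqr_ge0.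
have key : a * c + b * d <= s * t.
  have hp : 0 <= s * t by apply: mulr_ge0.
  case: (lerP (a * c + b * d) 0) => h; first by apply: le_trans h hp.
  rewrite -(ler_pXn2r (n := 2)) //; last by apply: ltW.
  rewrite exprMn es et.
  have : 0 <= (a * d - b * c) ^+ 2 by apply: sqr_ge0.
  nra.
nra.
Qed.

Variables (m n : nat) (W : 'M[R[i]]_(m, n)).

Definition reW (v : 'cV[R]_n) i := \sum_j complex.Re (W i j) * v j 0.
Definition imW (v : 'cV[R]_n) i := \sum_j complex.Im (W i j) * v j 0.

Lemma ReD : {morph (@complex.Re R) : x y / x + y}.
Proof. by move=> [a b] [c d]. Qed.
Lemma ImD : {morph (@complex.Im R) : x y / x + y}.
Proof. by move=> [a b] [c d]. Qed.

Lemma cmodW_entry v i :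
  cmod (W *m toCv v) i 0 = Num.sqrt (reW v i ^+ 2 + imW v i ^+ 2).
Proof.
have eRe : complex.Re ((W *m toCv v) i 0) = reW v i.
  rewrite mxE (big_morph _ ReD (erefl (complex.Re (0 : R[i])))); apply: eq_bigr => j _.
  by rewrite mxE; case: (W i j) => a b /=; ring.
have eIm : complex.Im ((W *m toCv v) i 0) = imW v i.
  rewrite mxE (big_morph _ ImD (erefl (complex.Im (0 : R[i])))); apply: eq_bigr => j _.
  by rewrite mxE; case: (W i j) => a b /=; ring.
rewrite -eRe -eIm /cmod mxE.
by case: ((W *m toCv v) i 0) => a b.
Qed.

Lemma iso_entry (H : adjoint_isometry W) j k :
  \sum_i (complex.Re (W i j) * complex.Re (W i k) + complex.Im (W i j) * complex.Im (W i k))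
  = (j == k)%:R.
Proof.
move: H; rewrite /adjoint_isometry => /matrixP /(_ j k); rewrite !mxE => <-.
rewrite (big_morph _ ReD (erefl (complex.Re (0 : R[i])))); apply: eq_bigr => i _.
rewrite !mxE; case: (W i j) => a b; case: (W i k) => c d /=; ring.
Qed.

Lemma iso_sum (H : adjoint_isometry W) v :
  \sum_i (reW v i ^+ 2 + imW v i ^+ 2) = sqnorm v.
Proof.
pose G (i : 'I_m) (j k : 'I_n) :=
  complex.Re (W i j) * v j 0 * (complex.Re (W i k) * v k 0) +
  complex.Im (W i j) * v j 0 * (complex.Im (W i k) * v k 0).
transitivity (\sum_i \sum_j \sum_k G i j k).
  apply: eq_bigr => i _; rewrite /reW /imW !expr2 -!dsum_mul -big_split.
  by apply: eq_bigr => j _; rewrite -big_split.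
rewrite exchange_big /=.
transitivity (\sum_j \sum_k v j 0 * v k 0 * (j == k)%:R).
  apply: eq_bigr => j _; rewrite exchange_big /=; apply: eq_bigr => k _.
  rewrite -(iso_entry H) mulr_sumr; apply: eq_bigr => i _; rewrite /G; ring.
apply: eq_bigr => j _.
rewrite (bigD1 j) //= eqxx big1 ?addr0 ?expr2 ?mulr1 // => k kj.
by rewrite eq_sym (negbTE kj) mulr0.
Qed.

Lemma cmod_contr (H : adjoint_isometry W) v1 v2 :
  sqnorm (cmod (W *m toCv v1) - cmod (W *m toCv v2)) <= sqnorm (v1 - v2).
Proof.
rewrite -(iso_sum H); apply: ler_sum => i _.
rewrite mxE !cmodW_entry.
have -> : reW (v1 - v2) i = reW v1 i - reW v2 i.
  by rewrite /reW -sumrB; apply: eq_bigr => j _; rewrite !mxE; ring.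
have -> : imW (v1 - v2) i = imW v1 i - imW v2 i.
  by rewrite /imW -sumrB; apply: eq_bigr => j _; rewrite !mxE; ring.
rewrite mxE cmodW_entry; apply: sqrt_contr.
Qed.
End CX.
Section MS.
Context {R : realType} {d : measure_display} {T : measurableType d}
  (P : probability T R).

Definition mvec n (v : T -> 'cV[R]_n) :=
  forall j, measurable_fun setT (fun t => v t j 0).

Lemma mvecB n (v w : T -> 'cV[R]_n) : mvec v -> mvec w -> mvec (fun t => v t - w t).
Proof.
move=> hv hw j.
have -> : (fun t => (v t - w t) j 0) = (fun t => v t j 0 - w t j 0).
  by apply/funext => t; rewrite !mxE.
exact: measurable_funB.
Qed.

Lemma mvec_cst n (c : 'cV[R]_n) : mvec (fun _ => c).
Proof. by move=> j; exact: measurable_cst. Qed.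

Lemma mvec_avg n (Q : {set {set 'I_n}}) (v : T -> 'cV[R]_n) :
  mvec v -> mvec (fun t => block_avg Q (v t)).
Proof.
move=> hv j.
have -> : (fun t => block_avg Q (v t) j 0) =
   (fun t => (\sum_k (if k \in finset.pblock Q j then v t k 0 else 0))
             * (#|finset.pblock Q j|%:R)^-1).
  by apply/funext => t; rewrite mxE big_mkcond.
apply: measurable_funM; last exact: measurable_cst.
apply: measurable_sum => k; case: (k \in _) => //; exact: measurable_cst.
Qed.

Lemma meas_lin n (v : T -> 'cV[R]_n) (c : 'I_n -> R) : mvec v ->
  measurable_fun setT (fun t => \sum_j c j * v t j 0).
Proof.
move=> hv; apply: measurable_sum => j.
by apply: measurable_funM; [exact: measurable_cst | exact: hv].
Qed.

Lemma meas_sqrt (f : T -> R) : measurable_fun setT f ->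
  measurable_fun setT (fun t => Num.sqrt (f t)).
Proof.
move=> mf; change (measurable_fun setT (Num.sqrt \o f)).
exact: (measurableT_comp (continuous_measurable_fun (@sqrt_continuous R)) mf).
Qed.

Lemma mvec_cmod m n (W : 'M[R[i]]_(m, n)) (v : T -> 'cV[R]_n) :
  mvec v -> mvec (fun t => cmod (W *m toCv (v t))).
Proof.
move=> hv j.
have -> : (fun t => cmod (W *m toCv (v t)) j 0) =
  (fun t => Num.sqrt (reW W (v t) j ^+ 2 + imW W (v t) j ^+ 2)).
  by apply/funext => t; rewrite cmodW_entry.
apply: meas_sqrt; apply: measurable_funD; apply: measurable_funX; exact: meas_lin.
Qed.

Lemma meas_nrm n (v : T -> 'cV[R]_n) : mvec v ->
  measurable_fun setT (fun t => nrm (v t)).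
Proof.
move=> hv; apply: meas_sqrt; apply: measurable_sum => j.
by apply: measurable_funX; exact: hv.
Qed.

Local Open Scope ereal_scope.

Definition L2 (f : T -> R) := sqrte (\int[P]_t ((f t ^+ 2)%R)%:E).

Lemma meas_sq (f : T -> R) : measurable_fun setT f ->
  measurable_fun setT (fun t => ((f t ^+ 2)%R)%:E).
Proof. by move=> mf; apply/measurable_EFinP; exact: measurable_funX. Qed.

Lemma L2_N (f : T -> R) : L2 f = 'N[P]_2%:E[EFin \o f].
Proof.
rewrite unlock /L2 -poweR12_sqrt; last first.
  by apply: integral_ge0 => t _; rewrite lee_fin sqr_ge0.
congr (_ `^ _).
apply: eq_integral => t _ /=.
by congr EFin; rewrite (@powR_mulrn _ _ 2) ?normr_ge0 // real_normK // num_real.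
Qed.

Lemma L2_le (f g : T -> R) : measurable_fun setT f -> measurable_fun setT g ->
  (forall t, (0 <= f t <= g t)%R) -> L2 f <= L2 g.
Proof.
move=> mf mg h; rewrite /L2 lee_sqrt; last first.
  by apply: integral_ge0 => t _; rewrite lee_fin sqr_ge0.
apply: ge0_le_integral => //.
- by move=> t _; rewrite lee_fin sqr_ge0.
- exact: meas_sq.
- exact: meas_sq.
- move=> t _; rewrite lee_fin; have /andP[h1 h2] := h t.
  by rewrite ler_pXn2r // ?nnegrE // (le_trans h1 h2).
Qed.

Lemma L2_add (f g : T -> R) : measurable_fun setT f -> measurable_fun setT g ->
  L2 (fun t => f t + g t)%R <= L2 f + L2 g.
Proof.
move=> mf mg; rewrite !L2_N.
by apply: minkowski_EFin => //; rewrite ler1n.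
Qed.

End MS.
Theorem proposition1 (R : realType) (d : measure_display) (T : measurableType d)
  (P : probability T R) (Nn : nat -> nat)
  (W : forall m, 'M[R[i]]_(Nn m.+1, Nn m))
  (A : forall m, {set {set 'I_(Nn m)}})
  (X : T -> 'cV[R]_(Nn 0)) :
  (forall m, (0 < Nn m)%N) ->
  (forall m, adjoint_isometry (W m)) ->
  (forall m, block_partition (A m)) ->
  (forall i, measurable_fun setT (fun t => X t i 0)) ->
  P.-integrable setT (fun t => (sqnorm (X t))%:E) ->
  forall m : nat,
    (\int[P]_t (sqnorm (block_avg (A m) (avg_layer W A X m t)
                         - Evec P (exp_layer P W X m)))%:E
     <= (\sum_(n < m.+1)
           sqrte (\int[P]_t (sqnorm (block_avg (A n) (exp_layer P W X n t)
                                     - Evec P (exp_layer P W X n)))%:E))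
        * (\sum_(n < m.+1)
           sqrte (\int[P]_t (sqnorm (block_avg (A n) (exp_layer P W X n t)
                                     - Evec P (exp_layer P W X n)))%:E)))%E.
Proof.
move=> _ Hiso Hpart HX _ m.
pose Xl k := exp_layer P W X k.
pose Yl k := avg_layer W A X k.
pose E k := Evec P (Xl k).
pose u k t := Yl k t - Xl k t.
pose a k t := block_avg (A k) (Xl k t) - E k.
pose b k t := block_avg (A k) (Yl k t) - E k.
have Hm : forall k, mvec (Xl k) /\ mvec (Yl k).
  elim => [|k [h1 h2]]; first by split.
  split.
  - exact: (mvec_cmod (W k) (mvecB h1 (mvec_cst (E k)))).
  - exact: (mvec_cmod (W k) (mvecB h2 (mvec_avg (A k) h2))).
have mu k : measurable_fun setT (fun t => nrm (u k t)).
  by apply: meas_nrm; apply: mvecB; case: (Hm k).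
have ma k : measurable_fun setT (fun t => nrm (a k t)).
  by apply: meas_nrm; apply: mvecB; [apply: mvec_avg; case: (Hm k) | exact: mvec_cst].
have mb k : measurable_fun setT (fun t => nrm (b k t)).
  by apply: meas_nrm; apply: mvecB; [apply: mvec_avg; case: (Hm k) | exact: mvec_cst].
have Q1 k t : (nrm (u k.+1 t) <= nrm (u k t) + nrm (a k t))%R.
  have e : (Yl k t - block_avg (A k) (Yl k t)) - (Xl k t - E k) =
     (u k t - block_avg (A k) (u k t)) - a k t.
    rewrite /u /a avgB //; apply/matrixP => i j; rewrite !mxE; ring.
  have -> : u k.+1 t = cmod (W k *m toCv (Yl k t - block_avg (A k) (Yl k t)))
                      - cmod (W k *m toCv (Xl k t - E k)) by [].
  have h := cmod_contr (Hiso k) (Yl k t - block_avg (A k) (Yl k t)) (Xl k t - E k).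
  apply: le_trans; first by apply: nrm_le; exact: h.
  rewrite e; apply: (le_trans (nrmB _ _)); rewrite lerD2r.
  exact/nrm_le/avg_le2.
have Q2 k t : (nrm (b k t) <= nrm (u k t) + nrm (a k t))%R.
  have e : b k t = block_avg (A k) (u k t) + a k t.
    rewrite /u /a /b avgB //; apply/matrixP => i j; rewrite !mxE; ring.
  rewrite e; apply: (le_trans (nrmD _ _)); rewrite lerD2r.
  exact/nrm_le/avg_le.
have Ind k : (L2 P (fun t => nrm (u k t)) <= \sum_(n < k) L2 P (fun t => nrm (a n t)))%E.
  elim: k => [|k IH].
    rewrite big_ord0 /L2.
    rewrite (eq_integral (fun _ => 0%E)) ?integral0 ?sqrte0 // => t _.
    by rewrite /u subrr nrm0 expr0n.
  rewrite big_ord_recr /=.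
  apply: (le_trans (@L2_le _ _ _ P (fun t => nrm (u k.+1 t))
                          (fun t => nrm (u k t) + nrm (a k t))%R _ _ _)).
  - exact: mu.
  - exact: measurable_funD.
  - by move=> t; rewrite nrm_ge0 Q1.
  apply: (le_trans (L2_add P (mu k) (ma k))); exact: leeD.
have Fin : (L2 P (fun t => nrm (b m t)) <= \sum_(n < m.+1) L2 P (fun t => nrm (a n t)))%E.
  apply: (le_trans (@L2_le _ _ _ P (fun t => nrm (b m t))
                          (fun t => nrm (u m t) + nrm (a m t))%R _ _ _)).
  - exact: mb.
  - exact: measurable_funD.
  - by move=> t; rewrite nrm_ge0 Q2.
  apply: (le_trans (L2_add P (mu m) (ma m))); rewrite big_ord_recr /=; exact: leeD.
have eS : ((\sum_(n < m.+1)
           sqrte (\int[P]_t (sqnorm (block_avg (A n) (exp_layer P W X n t)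
                                     - Evec P (exp_layer P W X n)))%:E)) =
          (\sum_(n < m.+1) L2 P (fun t => nrm (a n t))))%E.
  apply: eq_bigr => n _; rewrite /L2; congr sqrte; apply: eq_integral => t _.
  by rewrite nrm_sqr.
have eL : ((\int[P]_t (sqnorm (block_avg (A m) (avg_layer W A X m t)
                         - Evec P (exp_layer P W X m)))%:E) =
          (L2 P (fun t => nrm (b m t)) * L2 P (fun t => nrm (b m t))))%E.
  rewrite -expe2 sqr_sqrte; last first.
    by apply: integral_ge0 => t _; rewrite lee_fin sqr_ge0.
  by apply: eq_integral => t _; rewrite nrm_sqr.
rewrite eS eL; apply: lee_pmul => //; exact: sqrte_ge0.
Qed.
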